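(* Let $F\in L^1(\mathbb T^d;\mathbb H^{m\times n})$, written $F(\boldsymbol\theta)=Z(\boldsymbol\theta)+W(\boldsymbol\theta)\mathbf j$ with $Z,W:\mathbb T^d\to\mathbb C_{\mathbf i}^{m\times n}$, and fix an ordered partition $S_L\dot\cup S_R=\{1,\dots,d\}$. For $\boldsymbol m\in\mathbb Z^d$ define $\tilde{\boldsymbol m}$ by $\tilde m_j=m_j$ for $j\in S_L$ and $\tilde m_j=-m_j$ for $j\in S_R$. Then for every $\boldsymbol m\in\mathbb Z^d$, $$\Phi\bigl(\widehat F^{(S_L,S_R)}(\boldsymbol m)\bigr)=\begin{bmatrix}\widehat Z(\boldsymbol m)&\widehat W(\tilde{\boldsymbol m})\\ -\widehat{\overline W}(-\tilde{\boldsymbol m})&\widehat{\overline Z}(-\boldsymbol m)\end{bmatrix},$$ where hats on the right denote ordinary complex matrix Fourier coefficients $\widehat G(\boldsymbol k)=(2\pi)^{-d}\int_{\mathbb T^d}G(\boldsymbol\theta)e^{-\mathbf i\langle\boldsymbol k,\boldsymbol\theta\rangle}d\boldsymbol\theta$.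
   Context: $\mathbb H$ is the quaternion algebra with units $\mathbf i,\mathbf j,\mathbf k=\mathbf i\mathbf j$; $\mathbb C_{\mathbf i}=\operatorname{span}_{\mathbb R}\{1,\mathbf i\}\cong\mathbb C$; bar is complex conjugation on $\mathbb C_{\mathbf i}$. For $A=Z+W\mathbf j$ ($Z,W\in\mathbb C_{\mathbf i}^{m\times n}$), $\Phi(A)=\begin{bmatrix}Z&W\\-\overline W&\overline Z\end{bmatrix}$. $\mathbb T^d=[-\pi,\pi)^d$ with Lebesgue measure. For $S\subseteq\{1,\dots,d\}$, $\langle\boldsymbol m,\boldsymbol\theta\rangle_S=\sum_{j\in S}m_j\theta_j$. The sandwich Fourier coefficient is $\widehat F^{(S_L,S_R)}(\boldsymbol m)=(2\pi)^{-d}\int_{\mathbb T^d}e^{-\mathbf i\langle\boldsymbol m,\boldsymbol\theta\rangle_{S_L}}F(\boldsymbol\theta)e^{-\mathbf i\langle\boldsymbol m,\boldsymbol\theta\rangle_{S_R}}d\boldsymbol\theta\in\mathbb H^{m\times n}$. *)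

(* Defs.v *)
From HB Require Import structures.
From mathcomp Require Import all_boot all_order all_algebra.
From mathcomp Require Import all_classical all_reals all_analysis.
From mathcomp Require Import complex.
Unset Printing Implicit Defensive.
Import Order.TTheory GRing.Theory Num.Theory.
Import numFieldNormedType.Exports.
Local Open Scope classical_set_scope.
Local Open Scope ring_scope.

Section Defs.
Context {R : realType}.

Fixpoint lebesgue_tuple (n : nat) : set (n.-tuple R) -> \bar R :=
  match n return set (n.-tuple R) -> \bar R with
  | 0 => fun A => (\d_ [tuple] A)%E
  | n'.+1 => fun A =>
      (product_measure1 (@lebesgue_measure R) (@lebesgue_tuple n'))
        [set p | A (cons_tuple p.1 p.2)]
  end.

Definition torus (d : nat) : set (d.-tuple R) :=
  [set t | forall j : 'I_d, - pi <= tnth t j < pi].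

Definition torus_integral {d : nat} (f : d.-tuple R -> R) : R :=
  fine (\int[(@lebesgue_tuple d)]_(x in torus d) (f x)%:E)%E.

Definition torus_integrable {d : nat} (f : d.-tuple R -> R) : Prop :=
  integrable (@lebesgue_tuple d) (torus d) (fun x => (f x)%:E).

Record quat := Quat { q0 : R; q1 : R; q2 : R; q3 : R }.

Definition qadd (p q : quat) : quat :=
  Quat (q0 p + q0 q) (q1 p + q1 q) (q2 p + q2 q) (q3 p + q3 q).

Definition qmul (p q : quat) : quat :=
  Quat (q0 p * q0 q - q1 p * q1 q - q2 p * q2 q - q3 p * q3 q)
       (q0 p * q1 q + q1 p * q0 q + q2 p * q3 q - q3 p * q2 q)
       (q0 p * q2 q - q1 p * q3 q + q2 p * q0 q + q3 p * q1 q)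
       (q0 p * q3 q + q1 p * q2 q - q2 p * q1 q + q3 p * q0 q).

Definition qj : quat := Quat 0 0 1 0.

Definition qofC (z : R[i]) : quat := Quat (complex.Re z) (complex.Im z) 0 0.

Definition cexpi (t : R) : R[i] := Complex (cos t) (sin t).
Definition qexpi (t : R) : quat := qofC (cexpi t).

Definition qmx_of {m n : nat} (Z W : 'M[R[i]]_(m, n)) : 'M[quat]_(m, n) :=
  \matrix_(p, q) qadd (qofC (Z p q)) (qmul (qofC (W p q)) qj).

(* For A = Z + W j: Z and W (note a + b i + c j + d k = (a + b i) + (c + d i) j) *)
Definition qmxZ {m n : nat} (A : 'M[quat]_(m, n)) : 'M[R[i]]_(m, n) :=
  map_mx (fun q => Complex (q0 q) (q1 q)) A.
Definition qmxW {m n : nat} (A : 'M[quat]_(m, n)) : 'M[R[i]]_(m, n) :=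
  map_mx (fun q => Complex (q2 q) (q3 q)) A.

Definition Phi {m n : nat} (A : 'M[quat]_(m, n)) : 'M[R[i]]_(m + m, n + n) :=
  block_mx (qmxZ A) (qmxW A)
           (- map_mx conjc (qmxW A)) (map_mx conjc (qmxZ A)).

Definition ipS {d : nat} (S : {set 'I_d}) (k : 'I_d -> int) (t : d.-tuple R) : R :=
  \sum_(j in S) (k j)%:~R * tnth t j.

Definition ip {d : nat} (k : 'I_d -> int) (t : d.-tuple R) : R :=
  \sum_(j < d) (k j)%:~R * tnth t j.

Definition quat_L1 {d m n : nat} (F : d.-tuple R -> 'M[quat]_(m, n)) : Prop :=
  forall p q, [/\ torus_integrable (fun t => q0 (F t p q)),
                  torus_integrable (fun t => q1 (F t p q)),
                  torus_integrable (fun t => q2 (F t p q)) &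
                  torus_integrable (fun t => q3 (F t p q))].

Definition quat_mean {d m n : nat} (G : d.-tuple R -> 'M[quat]_(m, n)) : 'M[quat]_(m, n) :=
  \matrix_(p, q)
    Quat ((2 * pi) ^- d * torus_integral (fun t => q0 (G t p q)))
         ((2 * pi) ^- d * torus_integral (fun t => q1 (G t p q)))
         ((2 * pi) ^- d * torus_integral (fun t => q2 (G t p q)))
         ((2 * pi) ^- d * torus_integral (fun t => q3 (G t p q))).

Definition sandwich_fourier {d m n : nat} (SL SR : {set 'I_d})
    (F : d.-tuple R -> 'M[quat]_(m, n)) (k : 'I_d -> int) : 'M[quat]_(m, n) :=
  quat_mean (fun t => map_mx (fun x =>
      qmul (qmul (qexpi (- ipS SL k t)) x) (qexpi (- ipS SR k t))) (F t)).

Definition cfourier {d m n : nat} (G : d.-tuple R -> 'M[R[i]]_(m, n))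
    (k : 'I_d -> int) : 'M[R[i]]_(m, n) :=
  \matrix_(p, q)
    (let g := fun t => G t p q * cexpi (- ip k t) in
     Complex ((2 * pi) ^- d * torus_integral (fun t => complex.Re (g t)))
             ((2 * pi) ^- d * torus_integral (fun t => complex.Im (g t)))).

End Defs.
Arguments quat R : clear implicits.

(* Main.v *)
Require Import Defs.
From HB Require Import structures.
From mathcomp Require Import all_boot all_order all_algebra.
From mathcomp Require Import reals.
From mathcomp Require Import complex.
From mathcomp Require all_classical all_analysis ring.
Import Order.TTheory GRing.Theory Num.Theory.
Local Open Scope ring_scope.

Module Aux.
From mathcomp Require Import all_classical all_reals all_analysis ring.
Lemma fine_swap (R : realType) (a b : \bar R) : fine (a - b)%E = - fine (b - a)%E.
Proof. case: a => [a| |]; case: b => [b| |] //=; by rewrite ?oppr0 // opprB. Qed.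

Lemma ti_opp (R : realType) d (f : d.-tuple R -> R) :
  torus_integral (fun t => - f t) = - torus_integral f.
Proof.
rewrite /torus_integral /integral.
have -> : ((fun x => (- f x)%:E) \_ (torus d)) = (fun x => - ((fun x => (f x)%:E) \_ (torus d)) x)%E.
  apply/funext => x; rewrite !patchE; case: (x \in torus d) => //=; by rewrite oppr0.
by rewrite funeposN funenegN fine_swap.
Qed.


Lemma sandwich_entry (R : realType) (a b : R) (z w : R[i]) :
  let x := qmul (qmul (qexpi a) (qadd (qofC z) (qmul (qofC w) qj))) (qexpi b) in
  Complex (q0 x) (q1 x) = z * cexpi (a + b) /\ Complex (q2 x) (q3 x) = w * cexpi (a - b).
Proof.
case: z => z1 z2; case: w => w1 w2.
rewrite /qexpi /qofC /cexpi /= cosD sinD cosB sinB.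
split; apply/eqP; rewrite eq_complex /=; apply/andP; split; apply/eqP; ring.
Qed.

Lemma conj_exp (R : realType) (w : R[i]) (x : R) :
  conjc w * cexpi x = conjc (w * cexpi (- x)).
Proof.
case: w => w1 w2; rewrite /cexpi cosN sinN.
apply/eqP; rewrite eq_complex /=; apply/andP; split; apply/eqP; ring.
Qed.

Lemma ReC (R : realType) (u : R[i]) : complex.Re (conjc u) = complex.Re u.
Proof. by case: u. Qed.

Lemma ImC (R : realType) (u : R[i]) : complex.Im (conjc u) = - complex.Im u.
Proof. by case: u. Qed.
End Aux.
Import Aux.
From mathcomp Require Import ring.

Theorem mainTheorem3 (R : realType) (d m n : nat)
    (F : d.-tuple R -> 'M[quat R]_(m, n))
    (Z W : d.-tuple R -> 'M[R[i]]_(m, n))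
    (SL SR : {set 'I_d}) :
  quat_L1 F ->
  (forall t, F t = qmx_of (Z t) (W t)) ->
  SL :&: SR = set0 -> SL :|: SR = [set: 'I_d] ->
  forall k : 'I_d -> int,
  let kt : 'I_d -> int := fun j => if j \in SL then k j else - k j in
  Phi (sandwich_fourier SL SR F k) =
  block_mx (cfourier Z k) (cfourier W kt)
           (- cfourier (fun t => map_mx conjc (W t)) (fun j => - kt j))
           (cfourier (fun t => map_mx conjc (Z t)) (fun j => - k j)).
Proof.
move=> _ hF hI hU k kt.
have hSR j : (j \in SR) = (j \notin SL).
  have /setP/(_ j) := hI; have /setP/(_ j) := hU.
  rewrite !inE; by case: (j \in SL); case: (j \in SR).
have ipE (t : d.-tuple R) : ip k t = ipS SL k t + ipS SR k t.
  rewrite /ip /ipS (bigID (fun j => j \in SL)) /=; congr (_ + _).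
  by apply: eq_bigl => j; rewrite hSR.
have iptE (t : d.-tuple R) : ip kt t = ipS SL k t - ipS SR k t.
  rewrite /ip /ipS (bigID (fun j => j \in SL)) /= -sumrN; congr (_ + _).
    by apply: eq_bigr => j hj; rewrite /kt hj.
  rewrite (eq_bigl (fun j => j \in SR)); last by move=> j; rewrite hSR.
  apply: eq_bigr => j; rewrite hSR /kt => /negbTE ->.
  by rewrite rmorphN mulNr.
have ipN (k' : 'I_d -> int) (t : d.-tuple R) : ip (fun j => - k' j) t = - ip k' t.
  by rewrite /ip -sumrN; apply: eq_bigr => j _; rewrite rmorphN mulNr.
rewrite /Phi; congr block_mx; [| | congr (- _)|]; apply/matrixP => p q;
  rewrite !mxE /sandwich_fourier /quat_mean ?mxE /=; congr Complex.
- congr (_ * _); congr torus_integral; apply: boolp.funext => t.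
  rewrite hF !mxE ipE (opprD (ipS SL k t)).
  by have [<- _] := sandwich_entry _ (- ipS SL k t) (- ipS SR k t) (Z t p q) (W t p q).
- congr (_ * _); congr torus_integral; apply: boolp.funext => t.
  rewrite hF !mxE ipE (opprD (ipS SL k t)).
  by have [<- _] := sandwich_entry _ (- ipS SL k t) (- ipS SR k t) (Z t p q) (W t p q).
- congr (_ * _); congr torus_integral; apply: boolp.funext => t.
  rewrite hF !mxE iptE (opprD (ipS SL k t)).
  have [_ hh] := sandwich_entry _ (- ipS SL k t) (- ipS SR k t) (Z t p q) (W t p q). by rewrite -hh.
- congr (_ * _); congr torus_integral; apply: boolp.funext => t.
  rewrite hF !mxE iptE (opprD (ipS SL k t)).
  have [_ hh] := sandwich_entry _ (- ipS SL k t) (- ipS SR k t) (Z t p q) (W t p q). by rewrite -hh.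
- congr (_ * _); congr torus_integral; apply: boolp.funext => t.
  rewrite hF !mxE ipN opprK conj_exp ReC iptE (opprD (ipS SL k t)).
  have [_ hh] := sandwich_entry _ (- ipS SL k t) (- ipS SR k t) (Z t p q) (W t p q). by rewrite -hh.
- rewrite -mulrN -ti_opp; congr (_ * _); congr torus_integral; apply: boolp.funext => t.
  rewrite hF !mxE ipN opprK conj_exp ImC iptE (opprD (ipS SL k t)).
  have [_ hh] := sandwich_entry _ (- ipS SL k t) (- ipS SR k t) (Z t p q) (W t p q). by rewrite -hh.
- congr (_ * _); congr torus_integral; apply: boolp.funext => t.
  rewrite hF !mxE ipN opprK conj_exp ReC ipE (opprD (ipS SL k t)).
  by have [<- _] := sandwich_entry _ (- ipS SL k t) (- ipS SR k t) (Z t p q) (W t p q).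
- rewrite -mulrN -ti_opp; congr (_ * _); congr torus_integral; apply: boolp.funext => t.
  rewrite hF !mxE ipN opprK conj_exp ImC ipE (opprD (ipS SL k t)).
  by have [<- _] := sandwich_entry _ (- ipS SL k t) (- ipS SR k t) (Z t p q) (W t p q).
Qed.
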